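(* Let $\Psi\subseteq\Omega$ be nonempty, $D=D(\Psi)$, let $\mathcal{G}_\Psi$ be a Gröbner basis of $Z_\Psi$, and let $\mathcal{E}:V_D\to V_A$ be the associated extension map. Then the composition $\mathcal{C}=\mathcal{R}\circ\mathcal{F}^{-1}\circ\mathcal{E}:V_D\to V_\Psi$ is an isomorphism of $\mathbb{F}_q$-vector spaces; in fact $\mathcal{C}$ is the inverse of the proper transform $\mathcal{P}:V_\Psi\to V_D$, $(c_{\underline\psi})_\Psi\mapsto\big(\sum_{\underline\psi\in\Psi}c_{\underline\psi}\underline\psi^{\underline d}\big)_{\underline d\in D}$. Moreover, for every $(c_{\underline\omega})_\Omega\in\mathcal{F}^{-1}(\mathcal{E}(V_D))$ one has $c_{\underline\omega}=0$ for all $\underline\omega\in\Omega\setminus\Psi$.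
   Context: Let $q$ be a prime power, $N\ge1$, $A=\{0,1,\dots,q-1\}^N$, $\Omega=\mathbb{F}_q^N$. For a finite set $S$, $V_S$ is the $\mathbb{F}_q$-vector space of vectors $(v_s)_{s\in S}$. Write $\underline\omega^{\underline a}=\omega_1^{a_1}\cdots\omega_N^{a_N}$ with $0^0=1$. Generalized IDFT $\mathcal{F}^{-1}:V_A\to V_\Omega$: $(h_{\underline a})_A\mapsto(c_{\underline\omega})_\Omega$ where, with $I=\{i:\omega_i\ne0\}=\{i_1<\dots<i_m\}$, $c_{\underline\omega}=(-1)^m\sum_{l_1,\dots,l_m=1}^{q-1}\{\sum_{J\subseteq\{1,\dots,N\}\setminus I}(-1)^{|J|}h_{\underline i(I,J)}\}\omega_{i_1}^{-l_1}\cdots\omega_{i_m}^{-l_m}$, and $\underline i(I,J)=(b_1,\dots,b_N)$ with $b_{i_j}=l_j$, $b_i=q-1$ for $i\in J$, $b_i=0$ otherwise; it is the inverse of the generalized DFT $(c_{\underline\omega})_\Omega\mapsto(\sum_{\underline\omega\in\Omega}c_{\underline\omega}\underline\omega^{\underline a})_A$. $\mathcal{R}:V_\Omega\to V_\Psi$ is restriction of coordinates to $\Psi$. Fix a monomial order $\preceq$ on $\mathbb{F}_q[x_1,\dots,x_N]$. $Z_\Psi$ is the ideal of polynomials vanishing on $\Psi$; the delta set $D(\Psi)$ is the set of $\underline d\in\mathbb{N}_0^N$ such that $\underline x^{\underline d}$ is not the leading monomial of any nonzero element of $Z_\Psi$ ($D(\Psi)\subseteq A$). The extension map $\mathcal{E}:V_{D(\Psi)}\to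 V_A$ sends $(h_{\underline d})$ to $(h_{\underline a})_A$ with $h_{\underline a}=\sum_{\underline d\in D(\Psi)}v^{(\underline a)}_{\underline d}h_{\underline d}$, where $\sum_{\underline d}v^{(\underline a)}_{\underline d}\underline x^{\underline d}$ is the remainder of $\underline x^{\underline a}$ on division by $\mathcal{G}_\Psi$. *)

(* Defs.v *)
From HB Require Import structures.
From mathcomp Require Import all_boot all_order all_algebra.
From Stdlib Require Import ClassicalDescription.
Set Implicit Arguments. Unset Strict Implicit. Unset Printing Implicit Defensive.
Import Order.TTheory GRing.Theory Num.Theory.
Local Open Scope ring_scope.

Definition pbool (P : Prop) : bool :=
  if excluded_middle_informative P then true else false.

Section Defs.
Variables (F : finFieldType) (N : nat).

Definition mexp := {ffun 'I_N -> nat}.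
Definition mexp_add (a b : mexp) : mexp := [ffun i => (a i + b i)%N].
Definition mexp0 : mexp := [ffun _ => 0%N].
Definition mdiv (d e : mexp) : Prop := forall i, (d i <= e i)%N.

(* a polynomial is a finite formal sum of terms c * x^e (a list of terms);
   polynomials are compared through their coefficient functions *)
Definition mpoly := seq (F * mexp).
Definition coefp (p : mpoly) (e : mexp) : F := \sum_(t <- p | t.2 == e) t.1.
Definition pmul (p r : mpoly) : mpoly :=
  [seq (t.1 * s.1, mexp_add t.2 s.2) | t <- p, s <- r].
Definition monom (e : mexp) : mpoly := [:: (1, e)].
Definition peval (p : mpoly) (w : 'I_N -> F) : F :=
  \sum_(t <- p) t.1 * \prod_(i < N) w i ^+ t.2 i.
Definition pnonzero (p : mpoly) : Prop := exists e, coefp p e != 0.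
Definition lincomb (qs G : seq mpoly) : mpoly :=
  flatten [seq pmul pr.1 pr.2 | pr <- zip qs G].

Definition monomial_order (le : rel mexp) : Prop :=
  [/\ reflexive le, antisymmetric le, transitive le, total le &
   [/\ 
(forall a b c, le a b -> le (mexp_add a c) (mexp_add b c))
    & (forall a, le mexp0 a)]].

Definition is_LM (le : rel mexp) (p : mpoly) (d : mexp) : Prop :=
  coefp p d != 0 /\ (forall e, coefp p e != 0 -> le e d).

Definition Om := {ffun 'I_N -> F}.
Definition vanishes (Psi : {set Om}) (p : mpoly) : Prop :=
  forall w, w \in Psi -> peval p w = 0.

Definition groebner (le : rel mexp) (Psi : {set Om}) (G : seq mpoly) : Prop :=
  [/\ (forall g, g \in G -> vanishes Psi g),
      (forall g, g \in G -> pnonzero g)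
    & (forall f d, vanishes Psi f -> is_LM le f d ->
         exists2 g, g \in G & exists2 dg, is_LM le g dg & mdiv dg d)].

Definition is_remainder (le : rel mexp) (G : seq mpoly) (f r : mpoly) : Prop :=
  (exists2 qs : seq mpoly, size qs = size G &
     forall e, coefp f e = coefp (lincomb qs G ++ r) e) /\
  (forall e, coefp r e != 0 -> forall g, g \in G ->
     forall dg, is_LM le g dg -> ~ mdiv dg e).

Definition q := #|F|.
Definition A := {ffun 'I_N -> 'I_q}.
Definition toexp (a : A) : mexp := [ffun i => nat_of_ord (a i)].

Lemma qm1_lt : (q.-1 < q)%N.
Proof. by rewrite ltn_predL; apply/card_gt0P; exists 0. Qed.
Definition qm1 : 'I_q := Ordinal qm1_lt.
Lemma q_gt0 : (0 < q)%N.
Proof. by apply/card_gt0P; exists 0. Qed.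
Definition q0 : 'I_q := Ordinal q_gt0.

(* delta set D(Psi) (as a subset of A, where it is contained) *)
Definition Dset (le : rel mexp) (Psi : {set Om}) : {set A} :=
  [set d : A | pbool (~ exists f : mpoly,
        vanishes Psi f /\ is_LM le f (toexp d))].

Definition DT le Psi := {d : A | d \in Dset le Psi}.
Definition PsiT (Psi : {set Om}) := {w : Om | w \in Psi}.

Definition bidx (I J : {set 'I_N}) (l : A) : A :=
  [ffun i => if i \in I then l i else if i \in J then qm1 else q0].

Definition IDFT (h : A -> F) (w : Om) : F :=
  let I := [set i | w i != 0] in
  (-1) ^+ #|I| *
  \sum_(l : A | [forall i, (nat_of_ord (l i) == 0%N) == (i \notin I)])
     ((\sum_(J : {set 'I_N} | J \subset ~: I) (-1) ^+ #|J| * h (bidx I J l))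
      * \prod_(i in I) (w i ^+ l i)^-1).

(* v a d = coefficient of x^d in the remainder of x^a *)
Definition rempoly le Psi (v : A -> DT le Psi -> F) (a : A) : mpoly :=
  [seq (v a d, toexp (val d)) | d <- enum [set: DT le Psi]].

Definition Ext le Psi (v : A -> DT le Psi -> F) (h : DT le Psi -> F) (a : A) : F :=
  \sum_(d : DT le Psi) v a d * h d.

Definition Restr Psi (c : Om -> F) (s : PsiT Psi) : F := c (val s).

Definition Cmap le Psi (v : A -> DT le Psi -> F) (h : DT le Psi -> F) : PsiT Psi -> F :=
  Restr (IDFT (Ext v h)).

Definition Proper le Psi (c : PsiT Psi -> F) (d : DT le Psi) : F :=
  \sum_(s : PsiT Psi) c s * \prod_(i < N) (val s i) ^+ (val d i).

End Defs.

(* Main.v *)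
Require Import Defs.
From HB Require Import structures.
From mathcomp Require Import all_boot all_order all_algebra all_field.
From mathcomp Require Import zify ring.
From Stdlib Require Import ClassicalDescription.
Import GRing.Theory.
Local Open Scope ring_scope.
Set Implicit Arguments. Unset Strict Implicit.

Section K.
Variable N : nat.
Variable F : finFieldType.

Lemma q_gt1 : (1 < q F)%N.
Proof. apply/card_gt1P; exists 0, 1; split => //; by rewrite eq_sym oner_neq0. Qed.

Lemma card_char0 : ((q F)%:R : F) = 0.
Proof.
have : \sum_(y : F) (y + 1) = \sum_(y : F) y.
  by rewrite [RHS](reindex_inj (addIr 1)).
rewrite big_split /= sumr_const.
by move=> H; apply: (addrI (\sum_(y:F) y)); rewrite addr0; exact: H.
Qed.

Lemma fact_off (u : F) : 1 - u ^+ (q F).-1 = (u == 0)%:R.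
Proof.
have q1 := q_gt1.
have [->|u0] := eqVneq u 0.
  rewrite expr0n; case: eqP => [h|_]; last by rewrite subr0.
  exfalso; lia.
suff -> : u ^+ (q F).-1 = 1 by rewrite subrr.
apply: (mulfI u0); rewrite mulr1 -exprS prednK; [exact: expf_card| lia].
Qed.

Lemma fact_on (u w : F) : w != 0 ->
  - \sum_(j < q F | j != 0%N :> nat) (u / w) ^+ j = (u == w)%:R.
Proof.
move=> w0.
have q1 := q_gt1.
have S (x : F) : \sum_(j < q F) x ^+ j =
   1 + \sum_(j < q F | j != 0%N :> nat) x ^+ j.
  by rewrite (bigD1 (Ordinal (ltnW q1))) //=.
have [->|uw] := eqVneq u w.
  rewrite divff //; move: (S 1).
  have E (P : pred 'I_(q F)) : \sum_(j < q F | P j) (1:F)^+j = \sum_(j<q F | P j) 1.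
    by apply: eq_bigr => j _; rewrite expr1n.
  rewrite !E [in X in X = _ -> _]sumr_const card_ord card_char0.
  by move/(congr1 (fun x => x - 1)); rewrite sub0r addrAC subrr add0r => <-; rewrite opprK.
have x1 : u / w - 1 != 0.
  by rewrite subr_eq0; apply: contra uw => /eqP h; rewrite -(divfK w0 u) h mul1r.
have : (u / w) ^+ q F - 1 = (u / w - 1) * \sum_(j < q F) (u / w) ^+ j by rewrite subrX1.
rewrite expf_card -{1}(mulr1 (u / w - 1)) => /(mulfI x1).
rewrite (S (u / w)) => /(congr1 (fun x => x - 1)).
by rewrite subrr addrAC subrr add0r => <-; rewrite oppr0.
Qed.
Definition mon (u : Om F N) (a : A F N) : F := \prod_(i < N) u i ^+ a i.

Lemma inner (I : {set 'I_N}) (l : A F N) (u : Om F N) :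
  \sum_(J : {set 'I_N} | J \subset ~: I) (-1) ^+ #|J| * mon u (bidx I J l)
  = \prod_(i < N) (if i \in I then u i ^+ l i else 1 - u i ^+ (q F).-1).
Proof.
have -> : \prod_(i < N) (if i \in I then u i ^+ l i else 1 - u i ^+ (q F).-1)
  = \prod_(i < N) ((if i \in I then 0 else - u i ^+ (q F).-1) +
                   (if i \in I then u i ^+ l i else 1)).
  by apply: eq_bigr => i _; case: ifP; rewrite ?add0r // addrC.
rewrite bigA_distr [RHS](bigID (fun J : {set 'I_N} => J \subset ~: I)) /=.
rewrite [X in _ = _ + X]big1 ?addr0; last first.
  move=> J /subsetPn [i iJ]; rewrite in_setC negbK => iI.
  by rewrite (bigD1 i) //= iJ iI mul0r.
apply: eq_bigr => J JI.
rewrite -prodr_const big_mkcond /= /mon -big_split /=.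
apply: eq_bigr => i _; rewrite /bidx ffunE.
case: (boolP (i \in I)) => iI.
  have -> : (i \in J) = false.
    by apply/negP => iJ; move/subsetP: JI => /(_ i iJ); rewrite in_setC iI.
  by rewrite mul1r.
by case: (i \in J); rewrite ?mul1r ?expr0 // mulN1r.
Qed.

Lemma IDFT_mon (u w : Om F N) : IDFT (mon u) w = (u == w)%:R.
Proof.
rewrite /IDFT /=.
set I := [set i | w i != 0].
under eq_bigr do rewrite inner.
have E (l : A F N) :
   \prod_(i < N) (if i \in I then u i ^+ l i else 1 - u i ^+ (q F).-1) *
   \prod_(i in I) (w i ^+ l i)^-1 =
   \prod_(i < N) (if i \in I then (u i / w i) ^+ l i else 1 - u i ^+ (q F).-1).
  rewrite [X in _ * X]big_mkcond /= -big_split /=; apply: eq_bigr => i _.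
  by case: ifP; rewrite ?mulr1 // exprMn exprVn.
under eq_bigr do rewrite E.
pose Q := fun (i : 'I_N) (j : 'I_(q F)) => ((j : nat) == 0%N) == (i \notin I).
pose H := fun i (j : 'I_(q F)) =>
  if i \in I then (u i / w i) ^+ j else 1 - u i ^+ (q F).-1.
rewrite (eq_bigr (fun l : A F N => \prod_(i < N) H i (l i))) //.
rewrite (eq_bigl (fun l : A F N => l \in family Q)); last first.
  move=> l; apply/forallP/familyP => h i; apply: h.
rewrite -(bigA_distr_big_dep Q H) -prodr_const big_mkcond /= -big_split /=.
rewrite (eq_bigr (fun i => (u i == w i)%:R)); last first.
  move=> i _; rewrite /Q /H.
  case: (boolP (i \in I)) => iI /=.
    rewrite mulN1r.
    rewrite (eq_bigl (fun j : 'I_(q F) => j != 0%N :> nat)); last by move=> j; rewrite eqbF_neg.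
    by rewrite fact_on //; move: iI; rewrite inE.
  rewrite mul1r (big_pred1 (q0 F)); last by move=> j; rewrite /= eqb_id.
  move: iI; rewrite inE negbK => /eqP ->; exact: fact_off.
have [->|neq] := eqVneq u w.
  by rewrite big1 // => i _; rewrite eqxx.
case: (pickP (fun i => u i != w i)) => [i ui|all].
  by rewrite (bigD1 i) //= (negbTE ui) mul0r.
by case/eqP: neq; apply/ffunP => i; move: (all i) => /= /negbFE /eqP.
Qed.

Lemma IDFT_ext (h1 h2 : A F N -> F) w : (forall a, h1 a = h2 a) -> IDFT h1 w = IDFT h2 w.
Proof.
move=> e; rewrite /IDFT /=; congr (_ * _); apply: eq_bigr => l _; congr (_ * _).
by apply: eq_bigr => J _; rewrite e.
Qed.

Lemma IDFT_sum (X : finType) (g : X -> F) (f : X -> A F N -> F) w :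
  IDFT (fun a => \sum_(x : X) g x * f x a) w = \sum_(x : X) g x * IDFT (f x) w.
Proof.
rewrite /IDFT /=; symmetry.
under eq_bigr do rewrite mulrCA mulr_sumr.
rewrite -mulr_sumr exchange_big /=; congr (_ * _); apply: eq_bigr => l _.
under eq_bigr do rewrite mulrA.
rewrite -mulr_suml; congr (_ * _).
under eq_bigr do rewrite mulr_sumr.
rewrite exchange_big /=; apply: eq_bigr => J _.
by rewrite mulr_sumr; apply: eq_bigr => x _; rewrite mulrCA.
Qed.

Lemma IDFT_lin (k : F) (h1 h2 : A F N -> F) w :
  IDFT (fun a => k * h1 a + h2 a) w = k * IDFT h1 w + IDFT h2 w.
Proof.
have := IDFT_sum (fun b : bool => if b then k else 1) (fun b => if b then h1 else h2) w.
rewrite big_bool /= mul1r => <-; apply: IDFT_ext => a.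
by rewrite big_bool /= mul1r.
Qed.

Definition mvals (w : 'I_N -> F) (e : mexp N) : F := \prod_(i < N) w i ^+ e i.

Lemma peval_coef (p : mpoly F N) w (s : seq (mexp N)) :
  uniq s -> (forall t, t \in p -> t.2 \in s) ->
  peval p w = \sum_(e <- s) Defs.coefp p e * mvals w e.
Proof.
move=> us ps; rewrite /Defs.coefp.
under [RHS]eq_bigr do rewrite mulr_suml big_mkcond.
rewrite [RHS]exchange_big /= /peval big_seq_cond [RHS]big_seq_cond.
apply: eq_bigr => t /andP [tp _].
rewrite [RHS](big_rem (t.2)); last exact: ps.
rewrite eqxx [X in _ = _ + X]big1_seq ?addr0 // => e /andP [_].
by rewrite (mem_rem_uniq _ us) inE => /andP [ne _]; rewrite eq_sym (negbTE ne).
Qed.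

Lemma peval_eqcoef (p r : mpoly F N) w :
  (forall e, Defs.coefp p e = Defs.coefp r e) -> peval p w = peval r w.
Proof.
move=> h.
rewrite (@peval_coef p w (undup (map snd (p ++ r)))) ?undup_uniq //; last first.
  by move=> t tp; rewrite mem_undup; apply: map_f; rewrite mem_cat tp.
rewrite (@peval_coef r w (undup (map snd (p ++ r)))) ?undup_uniq //; last first.
  by move=> t tp; rewrite mem_undup; apply: map_f; rewrite mem_cat tp orbT.
by apply: eq_bigr => e _; rewrite h.
Qed.

Lemma peval_cat (p r : mpoly F N) w : peval (p ++ r) w = peval p w + peval r w.
Proof. by rewrite /peval big_cat. Qed.

Lemma peval_pmul (p r : mpoly F N) w : peval (pmul p r) w = peval p w * peval r w.
Proof.
rewrite /peval /pmul big_allpairs_dep /= mulr_suml; apply: eq_bigr => t _.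
rewrite mulr_sumr; apply: eq_bigr => s _ /=.
rewrite (eq_bigr (fun i => w i ^+ t.2 i * w i ^+ s.2 i)); last first.
  by move=> i _; rewrite /mexp_add ffunE exprD.
by rewrite big_split /=; ring.
Qed.

Lemma peval_lincomb (qs G : seq (mpoly F N)) w :
  (forall g, g \in G -> peval g w = 0) -> peval (lincomb qs G) w = 0.
Proof.
elim: G qs => [|g G IH] [|q0 qs] h; rewrite /lincomb /=; try by rewrite /peval big_nil.
rewrite peval_cat peval_pmul (h g) ?mem_head // mulr0 add0r.
by apply: (IH qs) => g' g'G; apply: h; rewrite in_cons g'G orbT.
Qed.

Lemma seq_max (T : eqType) (k : T -> mexp N) (le : rel (mexp N)) :
  transitive le -> total le -> forall s : seq T, s != [::] ->
  exists2 x, x \in s & forall y, y \in s -> le (k y) (k x).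
Proof.
move=> tr to; elim => // x s IH _.
have lexx z : le z z by case/orP: (to z z).
case: (eqVneq s [::]) => [-> | ne].
  exists x; first by rewrite mem_head.
  by move=> y; rewrite inE => /eqP ->.
have [m ms mm] := IH ne.
case/orP: (to (k x) (k m)) => hx.
  exists m; first by rewrite in_cons ms orbT.
  by move=> y; rewrite in_cons => /orP [/eqP ->|ys] //; exact: mm.
exists x; first exact: mem_head.
move=> y; rewrite in_cons => /orP [/eqP ->|ys] //.
exact: (tr _ _ _ (mm y ys) hx).
Qed.

Section Main.
Variables (le : rel (mexp N)) (Psi : {set Om F N}) (G : seq (mpoly F N))
    (v : A F N -> DT le Psi -> F).

Lemma rem_eval (Hgr : groebner le Psi G)
  (Hrem : forall a : A F N, is_remainder le G (monom F (toexp a)) (rempoly v a))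
  a w : w \in Psi -> peval (rempoly v a) w = mon w a.
Proof.
move=> wP; case: (Hrem a) => [[qs _ hc] _].
have := peval_eqcoef w hc.
rewrite peval_cat peval_lincomb ?add0r; last first.
  by move=> g gG; case: Hgr => van _ _; apply: van.
move=> <-; rewrite /peval /monom big_seq1 mul1r /=.
by apply: eq_bigr => i _; rewrite ffunE.
Qed.

Lemma Ext_Proper (Hgr : groebner le Psi G)
  (Hrem : forall a : A F N, is_remainder le G (monom F (toexp a)) (rempoly v a))
  (c : PsiT Psi -> F) (a : A F N) :
  Ext v (Proper c) a = \sum_(s : PsiT Psi) c s * mon (val s) a.
Proof.
rewrite /Ext /Proper.
under eq_bigr do rewrite mulr_sumr.
rewrite exchange_big /=; apply: eq_bigr => s _.
rewrite -(rem_eval Hgr Hrem a (valP s)) /peval /rempoly big_map big_enum /= mulr_sumr.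
rewrite [RHS](eq_bigl xpredT); last by move=> d; rewrite inE.
apply: eq_bigr => d _ /=; rewrite mulrCA; congr (_ * (_ * _)).
by apply: eq_bigr => i _; rewrite ffunE.
Qed.

Lemma CP (Hgr : groebner le Psi G)
  (Hrem : forall a : A F N, is_remainder le G (monom F (toexp a)) (rempoly v a))
  (c : PsiT Psi -> F) (s : PsiT Psi) : Cmap v (Proper c) s = c s.
Proof.
rewrite /Cmap /Restr (IDFT_ext (val s) (Ext_Proper Hgr Hrem c)) IDFT_sum.
under eq_bigr do rewrite IDFT_mon.
rewrite (bigD1 s) //= eqxx mulr1 big1 ?addr0 // => s' ne.
by rewrite (inj_eq val_inj) (negbTE ne) mulr0.
Qed.

Lemma Qinj (h : DT le Psi -> F) : transitive le -> total le ->
  (forall w, w \in Psi -> \sum_d h d * mon w (val d) = 0) -> forall d, h d = 0.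
Proof.
move=> tr to hz d0; apply/eqP; apply: contraT => hd0.
pose f : mpoly F N := [seq (h d, toexp (val d)) | d <- enum [set: DT le Psi]].
have cf e : Defs.coefp f e = \sum_(d | toexp (val d) == e) h d.
  rewrite /Defs.coefp big_map big_enum_cond /=.
  by apply: eq_bigl => d; rewrite inE.
have toinj : injective (fun d : DT le Psi => toexp (val d)).
  move=> d1 d2 /= e; apply: val_inj; apply/ffunP => i; apply: val_inj.
  by move/ffunP: e => /(_ i); rewrite !ffunE.
have cfd d : Defs.coefp f (toexp (val d)) = h d.
  rewrite cf (eq_bigl (pred1 d)) ?big_pred1_eq // => d'.
  by apply/eqP/eqP => [/toinj|->].
have cfn e : Defs.coefp f e != 0 -> exists2 d, e = toexp (val d) & h d != 0.
  rewrite cf => nz.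
  case: (pickP (fun d => (toexp (val d) == e) && (h d != 0))) => [d /andP [/eqP <- hd]| none].
    by exists d.
  move: nz; rewrite big1 ?eqxx // => d de; move: (none d); rewrite de /=.
  by move/negbFE/eqP.
have [dm dmS dmax] : exists2 dm : DT le Psi, h dm != 0 &
    forall d, h d != 0 -> le (toexp (val d)) (toexp (val dm)).
  have [|dm] := seq_max (fun d : DT le Psi => toexp (val d)) tr to
     (s := [seq d <- enum [set: DT le Psi] | h d != 0]).
    apply/eqP => e; have : d0 \in [seq d <- enum [set: DT le Psi] | h d != 0].
      by rewrite mem_filter hd0 mem_enum inE.
    by rewrite e.
  rewrite mem_filter => /andP [hdm _] mm; exists dm => // d hd.
  by apply: mm; rewrite mem_filter hd mem_enum inE.
have LM : is_LM le f (toexp (val dm)).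
  by split; [rewrite cfd | move=> e /cfn [d -> hd]; exact: dmax].
have van : vanishes Psi f.
  move=> w wP; rewrite /peval big_map big_enum /= -[RHS](hz w wP).
  rewrite [LHS](eq_bigl xpredT); last by move=> d; rewrite inE.
  by apply: eq_bigr => d _ /=; congr (_ * _); apply: eq_bigr => i _; rewrite ffunE.
move: (valP dm); rewrite /Dset inE /pbool.
case: excluded_middle_informative => // nex _.
by case: nex; exists f.
Qed.
End Main.
End K.

Theorem mainTheorem6 (F : finFieldType) (N : nat) (le : rel (mexp N))
    (Psi : {set Om F N}) (G : seq (mpoly F N))
    (v : A F N -> DT le Psi -> F) :
  (0 < N)%N ->
  monomial_order le ->
  Psi != set0 ->
  groebner le Psi G ->
  (forall a : A F N, is_remainder le G (monom F (toexp a)) (rempoly v a)) ->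
  [/\ (* C is F_q-linear *)
      (forall (k : F) (h1 h2 : DT le Psi -> F) (s : PsiT Psi),
          Cmap v (fun d => k * h1 d + h2 d) s = k * Cmap v h1 s + Cmap v h2 s),
      (* C o P = id *)
      (forall (c : PsiT Psi -> F) (s : PsiT Psi), Cmap v (Proper c) s = c s),
      (* P o C = id *)
      (forall (h : DT le Psi -> F) (d : DT le Psi), Proper (Cmap v h) d = h d)
    & (* F^{-1}(E(V_D)) vanishes outside Psi *)
      (forall (h : DT le Psi -> F) (w : Om F N),
          w \notin Psi -> IDFT (Ext v h) w = 0)].
Proof.
move=> _ mo _ Hgr Hrem.
case: mo => _ _ tr to _.
have CP := CP Hgr Hrem.
pose Pf := fun c : {ffun PsiT Psi -> F} => [ffun d : DT le Psi => Proper c d].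
pose Qf := fun h : {ffun DT le Psi -> F} =>
  [ffun s : PsiT Psi => \sum_d h d * mon (val s) (val d)].
have Cext h1 h2 s : (forall d, h1 d = h2 d) -> Cmap v h1 s = Cmap v h2 s.
  move=> e; rewrite /Cmap /Restr; apply: IDFT_ext => a; rewrite /Ext.
  by apply: eq_bigr => d _; rewrite e.
have Pinj : injective Pf.
  move=> c1 c2 e; apply/ffunP => s; rewrite -(CP c1 s) -(CP c2 s); apply: Cext => d.
  by move/ffunP: e => /(_ d); rewrite !ffunE.
have Qinj' : injective Qf.
  move=> h1 h2 e; apply/ffunP => d; apply/eqP; rewrite -subr_eq0; apply/eqP.
  apply: (@Qinj _ _ _ _ (fun d => h1 d - h2 d) tr to _ d) => w wP.
  move/ffunP: e => /(_ (exist _ w wP)); rewrite !ffunE /= => e.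
  under eq_bigr do rewrite mulrBl.
  by rewrite sumrB e subrr.
have card : (#|{ffun DT le Psi -> F}| <= #|{ffun PsiT Psi -> F}|)%N.
  exact: leq_card Qinj'.
have [Pinv PK KP] := inj_card_bij Pinj card.
have Pe (h : DT le Psi -> F) d : Proper (Pinv [ffun d => h d]) d = h d.
  by move/ffunP: (KP [ffun d => h d]) => /(_ d); rewrite !ffunE.
have PC h d : Proper (Cmap v h) d = h d.
  have e2 s : Cmap v h s = Pinv [ffun d => h d] s.
    by rewrite -(CP (Pinv [ffun d => h d]) s); apply: Cext => d'; rewrite Pe.
  rewrite -(Pe h d) /Proper; apply: eq_bigr => s _; by rewrite e2.
split.
- move=> k h1 h2 s; rewrite /Cmap /Restr -IDFT_lin; apply: IDFT_ext => a.
  rewrite /Ext mulr_sumr -big_split; apply: eq_bigr => d _ /=; ring.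
- exact: CP.
- exact: PC.
- move=> h w wP.
  set c := Pinv [ffun d => h d].
  rewrite (@IDFT_ext _ _ _ (fun a => \sum_(s : PsiT Psi) c s * mon (val s) a)); last first.
    move=> a; rewrite -(Ext_Proper Hgr Hrem); apply: eq_bigr => d _; by rewrite Pe.
  rewrite IDFT_sum big1 // => s _; rewrite IDFT_mon.
  have : val s != w by apply: contraNneq wP => <-; exact: valP.
  by move/negbTE ->; rewrite mulr0.
Qed.
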